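(* Let $(\mathcal{M},\mathcal{L})$ be a regular symplectic pair with $\mathcal{M},\mathcal{L}\in\mathbb{C}^{2n\times2n}$ and $\mathrm{ind}_\infty(\mathcal{M},\mathcal{L})\le1$. Let $\hat n\le n$, $\ell=n-\hat n$, $U_0,U_\infty\in\mathbb{C}^{2n\times\ell}$, $U_1\in\mathbb{C}^{2n\times2\hat n}$, $\mathbf{U}=[U_1\,|\,U_0,U_\infty]$ and a symplectic $\widehat{\mathcal{S}}\in\mathbb{C}^{2\hat n\times2\hat n}$ satisfy $\mathbf{U}^H\mathcal{J}_n\mathbf{U}=\mathcal{J}_{\hat n}\oplus\mathcal{J}_\ell$, $\mathcal{M}U_0=0$, $\mathcal{L}U_\infty=0$, $\mathcal{M}U_1=\mathcal{L}U_1\widehat{\mathcal{S}}$, and let $\widehat{\mathcal{H}}$ be a Hamiltonian matrix with $e^{\widehat{\mathcal{H}}}=\widehat{\mathcal{S}}$. Define $$\mathcal{H}=\mathbf{U}(\widehat{\mathcal{H}}\oplus 0_{2\ell})(\mathcal{J}_{\hat n}\oplus\mathcal{J}_\ell)^H\mathbf{U}^H\mathcal{J}_n,$$ $$\Pi_0=\mathbf{U}(I_{2\hat n}\oplus I_\ell\oplus 0_\ell)(\mathcal{J}_{\hat n}\oplus\mathcal{J}_\ell)^H\mathbf{U}^H\mathcal{J}_n,\qquad \Pi_\infty=\mathbf{U}(I_{2\hat n}\oplus 0_\ell\oplus I_\ell)(\mathcal{J}_{\hat n}\oplus\mathcal{J}_\ell)^H\mathbf{U}^H\mathcal{J}_n.$$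 Then $\mathcal{M}\Pi_0=\mathcal{L}\Pi_\infty e^{\mathcal{H}}$.
   Context: $\mathcal{J}_m=\begin{bmatrix}0&I_m\\-I_m&0\end{bmatrix}$. A matrix $\mathcal{H}\in\mathbb{C}^{2m\times2m}$ is Hamiltonian if $\mathcal{H}\mathcal{J}_m=(\mathcal{H}\mathcal{J}_m)^H$; $\mathcal{S}$ is symplectic if $\mathcal{S}\mathcal{J}_m\mathcal{S}^H=\mathcal{J}_m$. A pair $(\mathcal{M},\mathcal{L})$ is symplectic if $\mathcal{M}\mathcal{J}_n\mathcal{M}^H=\mathcal{L}\mathcal{J}_n\mathcal{L}^H$, regular if $\det(\mathcal{M}-\lambda\mathcal{L})\ne0$ for some $\lambda$. $\mathrm{ind}_\infty(A,B)$ is the nilpotency index of the nilpotent block $N$ in the Kronecker canonical form $PAQ=\mathrm{diag}(J,I)$, $PBQ=\mathrm{diag}(I,N)$ of a regular pair, and is $0$ if $B$ is invertible. *)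

(* Defs.v *)
From HB Require Import structures.
From mathcomp Require Import all_boot all_order all_algebra.
From mathcomp Require Import complex.
From mathcomp Require Import all_classical all_reals all_analysis.
Set Implicit Arguments. Unset Strict Implicit. Unset Printing Implicit Defensive.
Import Order.TTheory GRing.Theory Num.Theory.
Import numFieldNormedType.Exports.
Local Open Scope ring_scope.
Local Open Scope complex_scope.
Local Open Scope classical_set_scope.

Definition ctmx (C : numClosedFieldType) m n (A : 'M[C]_(m, n)) : 'M[C]_(n, m) :=
  (map_mx Num.conj A)^T.

Definition Jmx (C : pzRingType) m : 'M[C]_(m + m) := block_mx 0 1%:M (- 1%:M) 0.

Definition dsum (C : pzRingType) m p (A : 'M[C]_m) (B : 'M[C]_p) : 'M[C]_(m + p) :=
  block_mx A 0 0 B.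

Definition hamiltonian (C : numClosedFieldType) m (H : 'M[C]_(m + m)) : Prop :=
  H *m Jmx C m = ctmx (H *m Jmx C m).

Definition symplectic (C : numClosedFieldType) m (S : 'M[C]_(m + m)) : Prop :=
  S *m Jmx C m *m ctmx S = Jmx C m.

Definition symplectic_pair (C : numClosedFieldType) m (M L : 'M[C]_(m + m)) : Prop :=
  M *m Jmx C m *m ctmx M = L *m Jmx C m *m ctmx L.

Definition regular_pair (C : comUnitRingType) k (A B : 'M[C]_k) : Prop :=
  exists lam : C, \det (A - lam *: B) != 0.

(* ind_oo(A,B) <= d : there is a Kronecker (Weierstrass) form
   P A Q = diag(J, I_s), P B Q = diag(I_r, N), with P, Q invertible and
   N nilpotent of nilpotency index <= d (i.e. N^d = 0; for s = 0 the
   index is 0, matching the convention ind = 0 when B is invertible). *)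
Definition ind_infty_le (C : pzRingType) k (A B : 'M[C]_k) (d : nat) : Prop :=
  exists (r s : nat) (P P' : 'M[C]_(r + s, k)) (Q Q' : 'M[C]_(k, r + s))
         (J : 'M[C]_r) (N : 'M[C]_s),
    [/\ P *m Q' = 1%:M /\ Q' *m P = 1%:M, Q *m P' = 1%:M /\ P' *m Q = 1%:M,
        P *m A *m Q = block_mx J 0 0 1%:M,
        P *m B *m Q = block_mx 1%:M 0 0 N
      & N ^+ d = 0].

Definition expmx (R : realType) m (A : 'M[R[i]]_m) : 'M[R[i]]_m :=
  lim ((fun N : nat => \sum_(k < N) (k`!%:R)^-1 *: A ^+ k) @ \oo).

(* Main.v *)
Require Import Defs.
From HB Require Import structures.
From mathcomp Require Import all_boot all_order all_algebra.
From mathcomp Require Import complex.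
From mathcomp Require Import all_classical all_reals all_analysis.
Import Order.TTheory GRing.Theory Num.Theory.
Local Open Scope ring_scope.
Local Open Scope complex_scope.
Module Aux.
Import numFieldNormedType.Exports.
Local Open Scope classical_set_scope.
Set Implicit Arguments.
Definition es (C : numFieldType) m (A : 'M[C]_m) : nat -> 'M[C]_m :=
  fun N : nat => \sum_(k < N) (k`!%:R)^-1 *: A ^+ k.
Definition limC (C : numFieldType) m (s : nat -> 'M[C]_m) : 'M[C]_m := lim (s @ \oo).
Arguments es {C m}.
Arguments limC {C m}.
Lemma expE (R : realType) m (A : 'M[R[i]]_m) : expmx A = limC (es A).
Proof. reflexivity. Qed.

Section Gen.
Variable C : numFieldType.
Lemma limC_point m (s : nat -> 'M[C]_m) : ~ (exists l : 'M[C]_m, s @ \oo --> l) -> limC s = 0.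
Proof.
move=> h; rewrite /limC /lim /lim_in getPN; last by move=> x hx; apply: h; exists x.
by apply/matrixP => i j; rewrite !mxE.
Qed.
Lemma limC_cvg m (s : nat -> 'M[C]_m) l : s @ \oo --> l -> limC s = l.
Proof. move=> h; exact: (cvg_lim (@norm_hausdorff C _) h). Qed.
End Gen.
Section Gen2.
Variable C : numFieldType.

Lemma cvg_entry m n (f : nat -> 'M[C]_(m,n)) (l : 'M[C]_(m,n)) i j :
  f @ \oo --> l -> (fun N => f N i j) @ \oo --> l i j.
Proof.
move=> h.
exact: (continuous_cvg _ (@coord_continuous C m n i j l) h).
Qed.

Lemma cvg_entries m n (f : nat -> 'M[C]_(m,n)) (l : 'M[C]_(m,n)) :
  (forall i j, (fun N => f N i j) @ \oo --> l i j) -> f @ \oo --> l.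
Proof.
move=> h A [P hP sPA].
have : \forall N \near \oo, forall i j, P i j (f N i j).
  apply: filter_forall => i; apply: filter_forall => j.
  exact: h.
by apply: filterS => N; apply: sPA.
Qed.

Lemma cvg_bigsum (I : eqType) (r : seq I) (g : I -> nat -> C) (a : I -> C) :
  (forall k, g k @ \oo --> a k) ->
  (fun N => \sum_(k <- r) g k N) @ \oo --> \sum_(k <- r) a k.
Proof.
move=> h; elim: r => [|x r IH].
  rewrite big_nil.
  have -> : (fun N => \sum_(k <- [::]) g k N) = (fun _ => 0) by apply: funext => N; rewrite big_nil.
  exact: cvg_cst.
rewrite big_cons.
have -> : (fun N => \sum_(k <- x :: r) g k N) = (g x + (fun N => \sum_(k <- r) g k N))
  by apply: funext => N; rewrite big_cons.
exact: cvgD.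
Qed.

Lemma cvg_mulmx p q r s (A : 'M[C]_(p,q)) (B : 'M[C]_(r,s)) (f : nat -> 'M[C]_(q,r)) l :
  f @ \oo --> l -> (fun N => A *m f N *m B) @ \oo --> A *m l *m B.
Proof.
move=> h; apply: cvg_entries => i j.
have E : forall X : 'M[C]_(q,r), (A *m X *m B) i j = \sum_(y < r) \sum_(x < q) A i x * X x y * B y j.
  move=> X; rewrite mxE; apply: eq_bigr => y _; rewrite mxE big_distrl /=.
  by apply: eq_bigr => x _.
rewrite E.
have -> : (fun N => (A *m f N *m B) i j) = (fun N => \sum_(y < r) \sum_(x < q) A i x * f N x y * B y j)
  by apply: funext => N; rewrite E.
apply: cvg_bigsum => y; apply: cvg_bigsum => x.
apply: cvgMl; apply: cvgMr; exact: cvg_entry.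
Qed.

End Gen2.
Section Gen3.
Variable C : numFieldType.

Lemma pow_conj m p (V : 'M[C]_(m,p)) (W : 'M[C]_(p,m)) (X : 'M[C]_p) k :
  W *m V = 1%:M -> (V *m X *m W) ^+ k.+1 = V *m X ^+ k.+1 *m W.
Proof.
move=> WV; elim: k => [|k IH]; first by rewrite !expr1.
rewrite exprS IH -mulmxE [X ^+ k.+2]exprS -mulmxE !mulmxA.
by rewrite -(mulmxA _ W V) WV mulmx1.
Qed.

Lemma es_split m (Y : 'M[C]_m) N :
  es Y N.+1 = 1 + \sum_(k < N) (k.+1`!%:R)^-1 *: Y ^+ k.+1.
Proof.
by rewrite /es big_ord_recl /= expr0 invr1 scale1r.
Qed.

Lemma es_conj m p (V : 'M[C]_(m,p)) (W : 'M[C]_(p,m)) (X : 'M[C]_p) N :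
  W *m V = 1%:M -> es (V *m X *m W) N.+1 = 1 - V *m W + V *m es X N.+1 *m W.
Proof.
move=> WV; rewrite !es_split.
have -> : \sum_(k < N) (k.+1`!%:R)^-1 *: (V *m X *m W) ^+ k.+1
    = V *m (\sum_(k < N) (k.+1`!%:R)^-1 *: X ^+ k.+1) *m W.
  rewrite mulmx_sumr mulmx_suml; apply: eq_bigr => k _.
  by rewrite pow_conj // scalemxAl scalemxAr.
rewrite mulmxDr mulmxDl mulmx1.
by rewrite addrA subrK.
Qed.
End Gen3.

Section Gen4.
Variable C : numFieldType.
Lemma limC_conj m p (V : 'M[C]_(m,p)) (W : 'M[C]_(p,m)) (X : 'M[C]_p) :
  W *m V = 1%:M -> (limC (es X) = 0 -> (1%:M : 'M[C]_p) = 0) ->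
  limC (es (V *m X *m W)) = 1 - V *m W + V *m limC (es X) *m W.
Proof.
move=> WV h1.
have [[l hl]|hn] := pselect (exists l : 'M[C]_p, es X @ \oo --> l).
  rewrite (limC_cvg hl); apply: limC_cvg.
  rewrite -cvg_shiftS.
  have -> : (fun n => es (V *m X *m W) n.+1) = (fun n => (1 - V *m W) + V *m es X n.+1 *m W).
    by apply: funext => N; rewrite es_conj.
  apply: cvgD; first exact: cvg_cst.
  apply: cvg_mulmx; by rewrite cvg_shiftS.
exfalso; apply: (hn); exists 0.
have -> : es X = fun _ => 0.
  apply: funext => N; rewrite -[LHS]mulmx1 h1 ?mulmx0 //.
  exact: limC_point.
exact: cvg_cst.
Qed.
End Gen4.
Section Alg.
Variable C : numClosedFieldType.
Lemma ctmx_block m1 m2 n1 n2 (A : 'M[C]_(m1,n1)) (B : 'M[C]_(m1,n2)) (D : 'M[C]_(m2,n1)) (E : 'M[C]_(m2,n2)) :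
  ctmx (block_mx A B D E) = block_mx (ctmx A) (ctmx D) (ctmx B) (ctmx E).
Proof. by rewrite /ctmx map_block_mx tr_block_mx. Qed.
Lemma ctmx0 m n : ctmx (0 : 'M[C]_(m,n)) = 0.
Proof. by rewrite /ctmx map_mx0 trmx0. Qed.
Lemma ctmx1 m : ctmx (1%:M : 'M[C]_m) = 1%:M.
Proof. by rewrite /ctmx map_mx1 trmx1. Qed.
Lemma ctmxN m n (A : 'M[C]_(m,n)) : ctmx (- A) = - ctmx A.
Proof. by rewrite /ctmx map_mxN linearN. Qed.
Lemma ctJ p : ctmx (Jmx C p) *m Jmx C p = 1%:M.
Proof.
rewrite /Jmx ctmx_block ctmx0 ctmxN ctmx1 mulmx_block.
rewrite !mulmx0 !mul0mx !mulmx1 !mulNmx !mul1mx opprK !addr0 !add0r.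
by rewrite scalar_mx_block.
Qed.
Lemma ctJJ p q : ctmx (dsum (Jmx C p) (Jmx C q)) *m dsum (Jmx C p) (Jmx C q) = 1%:M.
Proof.
rewrite /dsum ctmx_block !ctmx0 mulmx_block !mulmx0 !mul0mx !ctJ !addr0 !add0r.
by rewrite [RHS]scalar_mx_block.
Qed.
End Alg.
End Aux.
Import Aux.

Theorem lemma2p6 (R : realType) (n nh : nat) (hle : (nh <= n)%N)
  (M L : 'M[R[i]]_(n + n))
  (U1 : 'M[R[i]]_(n + n, nh + nh))
  (U0 Uinf : 'M[R[i]]_(n + n, n - nh))
  (Sh Hh : 'M[R[i]]_(nh + nh)) :
  regular_pair M L ->
  symplectic_pair M L ->
  ind_infty_le M L 1 ->
  symplectic Sh ->
  let U := row_mx U1 (row_mx U0 Uinf) in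
  let JJ := dsum (Jmx _ nh) (Jmx _ (n - nh)) in
  ctmx U *m Jmx _ n *m U = JJ ->
  M *m U0 = 0 ->
  L *m Uinf = 0 ->
  M *m U1 = L *m U1 *m Sh ->
  hamiltonian Hh ->
  expmx Hh = Sh ->
  let H := U *m dsum Hh 0 *m ctmx JJ *m ctmx U *m Jmx _ n in
  let Pi0 := U *m dsum 1%:M (dsum 1%:M 0) *m ctmx JJ *m ctmx U *m Jmx _ n in
  let Piinf := U *m dsum 1%:M (dsum 0 1%:M) *m ctmx JJ *m ctmx U *m Jmx _ n in
  M *m Pi0 = L *m Piinf *m expmx H.
Proof.
move=> reg sp ind sym U JJ hU hM0 hLinf hM1 ham hexp H Pi0 Piinf.
pose K := ctmx JJ *m ctmx U *m Jmx _ n.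
pose P := col_mx (1%:M : 'M[R[i]]_(nh + nh)) (0 : 'M[R[i]]_(n - nh + (n - nh), nh + nh)).
pose Q := row_mx (1%:M : 'M[R[i]]_(nh + nh)) (0 : 'M[R[i]]_(nh + nh, n - nh + (n - nh))).
have KU : K *m U = 1%:M.
  by rewrite /K -!mulmxA (mulmxA (ctmx U)) hU; exact: ctJJ.
pose V := U *m P.
pose W := Q *m K.
have QP : Q *m P = 1%:M by rewrite /Q /P mul_row_col mulmx1 mulmx0 addr0.
have WV : W *m V = 1%:M by rewrite /W /V mulmxA -(mulmxA Q) KU mulmx1 QP.
have HE : H = V *m Hh *m W.
  rewrite /H; have -> : dsum Hh 0 = P *m Hh *m Q.
    by rewrite /P /Q mul_col_mx mul1mx mul0mx mul_col_row mulmx1 mulmx0 !mul0mx.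
  by rewrite /V /W /K !mulmxA.
have E : expmx H = 1 - V *m W + V *m Sh *m W.
  rewrite HE -hexp !expE; apply: limC_conj => // h0.
  have Sh0 : Sh = 0 by rewrite -hexp expE.
  move: sym; rewrite /symplectic Sh0 !mul0mx => J0.
  have := @ctJ (R[i]) nh; rewrite -J0 mulmx0 => h.
  by rewrite -h.
have key0 : M *m U *m dsum 1%:M (dsum 1%:M 0) = M *m U1 *m Q.
  rewrite /U /Q /dsum !mul_mx_row hM0 !mul_row_block.
  by rewrite !mulmx0 !mul0mx !addr0 !add0r !row_mx0.
have keyi : L *m U *m dsum 1%:M (dsum 0 1%:M) = L *m U1 *m Q.
  rewrite /U /Q /dsum !mul_mx_row hLinf !mul_row_block.
  by rewrite !mulmx0 !mul0mx !addr0 !add0r !row_mx0.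
have P0 : M *m Pi0 = M *m U1 *m W by rewrite /Pi0 /W /K !mulmxA key0.
have Pi : L *m Piinf = L *m U1 *m W by rewrite /Piinf /W /K !mulmxA keyi.
rewrite P0 Pi E hM1.
clearbody V W.
rewrite mulmxDr mulmxBr mulmx1 !mulmxA -!(mulmxA (L *m U1) W V) WV !mulmx1.
by rewrite subrr add0r.
Qed.
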